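(* For every $k \ge 3$, the space $\mathrm{Conf}_2(B_k)$ is homotopy equivalent to a connected graph whose first Betti number is at least $k-1$.
   Context: The banana graph $B_k$ is the graph with two vertices connected by $k$ edges. $\mathrm{Conf}_n(X)=\{(x_1,\dots,x_n)\in X^n : x_i\neq x_j \text{ for } i\neq j\}$. *)

(* Defs.v *)
From HB Require Import structures.
From mathcomp Require Import all_boot all_order all_algebra.
From mathcomp Require Import all_classical all_reals all_analysis.

Import Order.TTheory GRing.Theory Num.Theory.
Import numFieldNormedType.Exports.
Local Open Scope classical_set_scope.
Local Open Scope ring_scope.

Record multigraph := FGraph {
  nv : nat;
  ne : nat;
  gsrc : 'I_ne -> 'I_nv;
  gtgt : 'I_ne -> 'I_nv }.

Definition banana (k : nat) : multigraph :=
  FGraph 2 k (fun _ => ord0) (fun _ => ord_max).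

Definition gadj (G : multigraph) : rel 'I_(nv G) :=
  fun u v => [exists e : 'I_(ne G),
     ((gsrc G e == u) && (gtgt G e == v)) || ((gsrc G e == v) && (gtgt G e == u))].

Definition gconnected (G : multigraph) : Prop :=
  (0 < nv G)%N /\ forall u v : 'I_(nv G), connect (gadj G) u v.

Definition ncomp (G : multigraph) : nat := n_comp (gadj G) predT.

Definition betti1 (G : multigraph) : nat := (ne G + ncomp G - nv G)%N.

(* Geometric realization of a finite graph, as a subset of the Euclidean
   space R^nv x R^ne x R^ne.  Distinct edges only
   meet at common endpoints, and each arc (also a loop) is embedded, so this
   compact set is homeomorphic to the usual CW realization of G. *)
Notation ambient R G :=
  ('rV[R]_(nv G) * 'rV[R]_(ne G) * 'rV[R]_(ne G))%type.

Definition delta (R : realType) (n : nat) (i : 'I_n) : 'rV[R]_n :=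
  \row_j (j == i)%:R.

Definition vertex_pt (R : realType) (G : multigraph) (v : 'I_(nv G))
  : ambient R G := (delta R (nv G) v, 0, 0).

Definition edge_pt (R : realType) (G : multigraph) (e : 'I_(ne G)) (t : R)
  : ambient R G :=
  ((1 - t) *: delta R (nv G) (gsrc G e) + t *: delta R (nv G) (gtgt G e),
   (t * (1 - t)) *: delta R (ne G) e,
   (t * (1 - t) * (1 - 2 * t)) *: delta R (ne G) e).

Definition realization (R : realType) (G : multigraph) : set (ambient R G) :=
  [set x | (exists v, x = vertex_pt R G v) \/
           (exists e, exists2 t, `[0, 1]%classic t & x = edge_pt R G e t)].

Definition Conf2 (T : Type) (X : set T) : set (T * T) :=
  [set p | X p.1 /\ X p.2 /\ p.1 <> p.2].

Definition homotopic_on (R : realType) (S T : topologicalType)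
    (A : set S) (B : set T) (f g : S -> T) : Prop :=
  exists H : R * S -> T,
    {within `[0, 1]%classic `*` A, continuous H} /\
    (forall x, A x -> H (0, x) = f x /\ H (1, x) = g x) /\
    (forall t x, `[0, 1]%classic t -> A x -> B (H (t, x))).

Definition homotopy_equivalent (R : realType) (S T : topologicalType)
    (A : set S) (B : set T) : Prop :=
  exists (f : S -> T) (g : T -> S),
    {within A, continuous f} /\ {within B, continuous g} /\
    (forall x, A x -> B (f x)) /\ (forall y, B y -> A (g y)) /\
    homotopic_on R S S A A (g \o f) id /\ homotopic_on R T T B B (f \o g) id.

(* Main.v *)
Require Import Defs.
From HB Require Import structures.
From mathcomp Require Import all_boot all_order all_algebra.
From mathcomp Require Import all_classical all_reals all_analysis.
From mathcomp Require Import ring lra zify.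
Import Order.TTheory GRing.Theory Num.Theory.
Import numFieldNormedType.Exports.
Local Open Scope classical_set_scope.
Local Open Scope ring_scope.

Section Toolkit.
Variable R : realType.

Lemma row_sum_delta n (h : 'I_n -> R) :
  \row_j h j = \sum_j h j *: (\row_i ((i == j)%:R : R)).
Proof.
apply/rowP => j; rewrite mxE summxE (bigD1 j) //= !mxE eqxx mulr1 big1 ?addr0 //.
by move=> i /negbTE ji; rewrite !mxE eq_sym ji mulr0.
Qed.

Lemma cvg_row {T : Type} (F : set_system T) {FF : Filter F} n
   (h : T -> 'I_n -> R) (a : 'I_n -> R) :
  (forall j, h^~ j @ F --> a j) ->
  (fun q => \row_j h q j : 'rV[R]_n) @ F --> \row_j a j.
Proof.
move=> H.
rewrite row_sum_delta.
under eq_fun do rewrite row_sum_delta.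
apply: cvg_big.
- exact: add_continuous.
- move=> j _; apply: cvgZ; [exact: H | exact: cvg_cst].
Qed.

Lemma cvg_sq0 {T : Type} (F : set_system T) {FF : Filter F}
   (c v : T -> R) : c @ F --> 0 -> (forall q, `|v q| <= 1) ->
   (fun q => c q * v q) @ F --> 0.
Proof.
move=> Hc Hv; apply/cvgr0Pnorm_le => e e0.
move/cvgr0Pnorm_le : Hc => /(_ e e0); apply: filterS => q Hq.
rewrite normrM; apply: le_trans Hq.
by rewrite -[leRHS]mulr1 ler_wpM2l.
Qed.


Variable k : nat.
Hypothesis hk : (3 <= k)%N.

Definition A := ('rV[R]_2 * 'rV[R]_k * 'rV[R]_k)%type.
Definition P := (A * A)%type.

Definition o1 : 'I_2 := ord_max.
Definition sA (x : A) : R := x.1.1 0 o1.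
Definition wA (x : A) (i : 'I_k) : R := x.1.2 0 i.

Definition rho (p : P) : R :=
  sA p.1 * (1 - sA p.1) * (sA p.2 * (1 - sA p.2)) - \sum_i wA p.1 i * wA p.2 i.
Definition dd (p : P) : R := sA p.1 - sA p.2.
Definition psi (p : P) : R := 4 * Num.sqrt (rho p) / (1 + `|dd p|).
Definition DD (p : P) : R := `|dd p| + psi p.
Definition tau (p : P) : R := 2^-1 + dd p / (2 * DD p).

Lemma sA_cont : continuous sA.
Proof.
move=> x; apply: (@continuous_comp _ _ _ (fun x : A => x.1.1) (fun M : 'rV[R]_2 => M 0 o1)).
- apply: (@continuous_comp _ _ _ fst fst); [exact: cvg_fst|exact: cvg_fst].
- exact: coord_continuous.
Qed.

Lemma wA_cont i : continuous (wA^~ i).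
Proof.
move=> x; apply: (@continuous_comp _ _ _ (fun x : A => x.1.2) (fun M : 'rV[R]_k => M 0 i)).
- apply: (@continuous_comp _ _ _ fst snd); [exact: cvg_fst|exact: cvg_snd].
- exact: coord_continuous.
Qed.

Section Cv.
Variable p0 : P.
Let F := nbhs p0.

Lemma cv_s1 : (fun p : P => sA p.1) @ F --> sA p0.1.
Proof. apply: (continuous_cvg _ (sA_cont _)); exact: cvg_fst. Qed.
Lemma cv_s2 : (fun p : P => sA p.2) @ F --> sA p0.2.
Proof. apply: (continuous_cvg _ (sA_cont _)); exact: cvg_snd. Qed.
Lemma cv_w1 i : (fun p : P => wA p.1 i) @ F --> wA p0.1 i.
Proof. apply: (continuous_cvg _ (wA_cont i _)); exact: cvg_fst. Qed.
Lemma cv_w2 i : (fun p : P => wA p.2 i) @ F --> wA p0.2 i.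
Proof. apply: (continuous_cvg _ (wA_cont i _)); exact: cvg_snd. Qed.

Ltac cv := repeat first
  [ (exact: cv_s1) | (exact: cv_s2) | (exact: cv_w1) | (exact: cv_w2) | (exact: cvg_cst)
  | (apply: cvgD) | (apply: cvgB) | (apply: cvgM) | (apply: cvgN) ].

Lemma cv_rho : rho @ F --> rho p0.
Proof.
rewrite /rho; apply: cvgB; first by cv.
apply: cvg_big; first exact: add_continuous.
move=> i _; cv.
Qed.
Lemma cv_dd : dd @ F --> dd p0.
Proof. rewrite /dd; cv. Qed.

Lemma cv_inv (h : P -> R) : h @ F --> h p0 -> h p0 != 0 ->
  (fun p => (h p)^-1) @ F --> (h p0)^-1.
Proof. by move=> H H0; apply: cvgV. Qed.

Lemma cv_sqrt (h : P -> R) : h @ F --> h p0 -> (fun p => Num.sqrt (h p)) @ F --> Num.sqrt (h p0).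
Proof. by move=> H; apply: (continuous_cvg _ (@sqrt_continuous R _)). Qed.

Lemma cv_abs (h : P -> R) : h @ F --> h p0 -> (fun p => `|h p|) @ F --> `|h p0|.
Proof. by move=> H; apply: cvg_norm. Qed.

Lemma one_abs_neq0 (x : R) : 1 + `|x| != 0.
Proof. by rewrite gt_eqF // ltr_pwDr. Qed.

Lemma cv_psi : psi @ F --> psi p0.
Proof.
rewrite /psi; apply: cvgM; first (apply: cvgM; first exact: cvg_cst).
  apply: cv_sqrt; exact: cv_rho.
apply: cv_inv; last exact: one_abs_neq0.
apply: cvgD; first exact: cvg_cst. (apply: cv_abs; exact: cv_dd).
Qed.

Lemma cv_DD : DD @ F --> DD p0.
Proof. apply: cvgD; [(apply: cv_abs; exact: cv_dd) | exact: cv_psi]. Qed.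

Lemma cv_tau : DD p0 != 0 -> tau @ F --> tau p0.
Proof.
move=> H; rewrite /tau; apply: cvgD; first exact: cvg_cst.
apply: cvgM; first exact: cv_dd.
apply: cv_inv; last by rewrite mulf_neq0.
apply: cvgM; [exact: cvg_cst | exact: cv_DD].
Qed.

End Cv.

Definition PT := {p : 'I_k * 'I_k | p.1 != p.2}.
Definition m := #|{: PT}|.
Definition d1 (e : 'I_m) : 'I_k := (val (enum_val e : PT)).1.
Definition d2 (e : 'I_m) : 'I_k := (val (enum_val e : PT)).2.
Definition B := ('rV[R]_2 * 'rV[R]_m * 'rV[R]_m)%type.

Definition U2 (x : R) : 'rV[R]_2 := (1 - x) *: delta R 2 ord0 + x *: delta R 2 ord_max.

Definition Wf (p : P) (e : 'I_m) : R :=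
  Num.sqrt (wA p.1 (d1 e)) * Num.sqrt (wA p.2 (d2 e)) * (psi p + 2 * `|dd p|)
   / ((1 + `|dd p|) * DD p ^+ 2).

Definition ff (p : P) : B :=
  (U2 (tau p), \row_e Wf p e, \row_e (Wf p e * (1 - 2 * tau p))).

Lemma cv_U2 {T} (F : set_system T) {FF : Filter F} (h : T -> R) a :
  h @ F --> a -> (fun q => U2 (h q)) @ F --> U2 a.
Proof.
move=> H; apply: cvgD; apply: cvgZ => //; try exact: cvg_cst.
apply: cvgB => //; exact: cvg_cst.
Qed.

Lemma ff_cont p0 : DD p0 != 0 -> {for p0, continuous ff}.
Proof.
move=> H0.
have cW e : (fun p => Wf p e) @ nbhs p0 --> Wf p0 e.
  rewrite /Wf; apply: cvgM; last first.
    apply: cv_inv; last by rewrite mulf_neq0 ?one_abs_neq0 ?expf_neq0.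
    apply: cvgM; first by apply: cvgD; [exact: cvg_cst|apply: cv_abs; exact: cv_dd].
    by rewrite expr2; apply: cvgM; exact: cv_DD.
  apply: cvgM; first (apply: cvgM; apply: cv_sqrt).
  - exact: cv_w1.
  - exact: cv_w2.
  apply: cvgD; first exact: cv_psi.
  apply: cvgM; first exact: cvg_cst. by apply: cv_abs; exact: cv_dd.
rewrite /prop_for /continuous_at /ff.
apply: (@cvg_pair _ _ _ _ (nbhs _) (nbhs _)); first apply: (@cvg_pair _ _ _ _ (nbhs _) (nbhs _)).
- apply: cv_U2; exact: cv_tau.
- by apply: cvg_row.
- apply: cvg_row => e; apply: cvgM => //.
  apply: cvgB; first exact: cvg_cst.
  apply: cvgM; first exact: cvg_cst. exact: cv_tau.
Qed.


Definition gg (q : B) : P :=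
  ((q.1.1, \row_i \sum_e ((d1 e == i)%:R * q.1.2 0 e),
           \row_i \sum_e ((d1 e == i)%:R * q.2 0 e)),
   (U2 (q.1.1 0 ord0), \row_j \sum_e ((d2 e == j)%:R * q.1.2 0 e),
           \row_j - \sum_e ((d2 e == j)%:R * q.2 0 e))).

Lemma gg_cont : continuous gg.
Proof.
move=> q0.
have c1 : (fun q : B => q.1.1) @ nbhs q0 --> q0.1.1.
  apply: (@continuous_comp _ _ _ fst fst); [exact: cvg_fst|exact: cvg_fst].
have c2 : (fun q : B => q.1.2) @ nbhs q0 --> q0.1.2.
  apply: (@continuous_comp _ _ _ fst snd); [exact: cvg_fst|exact: cvg_snd].
have c3 : (fun q : B => q.2) @ nbhs q0 --> q0.2 by exact: cvg_snd.
have e2 e : (fun q : B => q.1.2 0 e) @ nbhs q0 --> q0.1.2 0 e.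
  by apply: (continuous_cvg _ (@coord_continuous _ _ _ _ _ _)).
have e3 e : (fun q : B => q.2 0 e) @ nbhs q0 --> q0.2 0 e.
  by apply: (continuous_cvg _ (@coord_continuous _ _ _ _ _ _)).
have e1 : (fun q : B => q.1.1 0 ord0) @ nbhs q0 --> q0.1.1 0 ord0.
  by apply: (continuous_cvg _ (@coord_continuous _ _ _ _ _ _)).
have sm (h : 'I_m -> B -> R) (b : 'I_m -> R) : (forall e, h e @ nbhs q0 --> b e) ->
    (fun q => \sum_e h e q) @ nbhs q0 --> \sum_e b e.
  by move=> H; apply: cvg_big => //; exact: add_continuous.
rewrite /prop_for /continuous_at /gg.
apply: (@cvg_pair _ _ _ _ (nbhs _) (nbhs _)).
- apply: (@cvg_pair _ _ _ _ (nbhs _) (nbhs _)); first apply: (@cvg_pair _ _ _ _ (nbhs _) (nbhs _)).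
  + exact: c1.
  + apply: cvg_row => i; apply: sm => e; apply: cvgM; [exact: cvg_cst|exact: e2].
  + apply: cvg_row => i; apply: sm => e; apply: cvgM; [exact: cvg_cst|exact: e3].
- apply: (@cvg_pair _ _ _ _ (nbhs _) (nbhs _)); first apply: (@cvg_pair _ _ _ _ (nbhs _) (nbhs _)).
  + exact: cv_U2.
  + apply: cvg_row => i; apply: sm => e; apply: cvgM; [exact: cvg_cst|exact: e2].
  + apply: cvg_row => i; apply: cvgN; apply: sm => e; apply: cvgM; [exact: cvg_cst|exact: e3].
Qed.

Definition nuc (x : A) (i : 'I_k) : R := Num.min `|wA x i / (sA x * (1 - sA x))| 1.

Definition M (x : A) (l : R) : A :=
  (U2 l, \row_i (l * (1 - l) * nuc x i), \row_i (l * (1 - l) * (1 - 2 * l) * nuc x i)).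

Definition Hc (lp : R * P) : P :=
  (M lp.2.1 (lp.1 * sA lp.2.1 + (1 - lp.1) * tau lp.2),
   M lp.2.2 (lp.1 * sA lp.2.2 + (1 - lp.1) * (1 - tau lp.2))).

Lemma minr1_cont : continuous (fun x : R => Num.min x 1).
Proof.
move=> x; have := @continuous_min R R id (fun=> 1) x.
apply. exact: cvg_id. exact: cvg_cst.
Qed.

Lemma nuc_le1 x i : `|nuc x i| <= 1.
Proof.
rewrite /nuc ger0_norm; first by rewrite ge_min lexx orbT.
by rewrite le_min normr_ge0 ler01.
Qed.

Lemma M_cv {T} (F : set_system T) {FF : Filter F} (x : T -> A) (l : T -> R) (x0 : A) (l0 : R) :
  x @ F --> x0 -> l @ F --> l0 ->
  (sA x0 * (1 - sA x0) != 0 \/ l0 * (1 - l0) = 0) ->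
  (fun q => M (x q) (l q)) @ F --> M x0 l0.
Proof.
move=> Hx Hl Hcase.
have cs : (fun q => sA (x q)) @ F --> sA x0 by apply: (continuous_cvg _ (sA_cont _)).
have cw i : (fun q => wA (x q) i) @ F --> wA x0 i by apply: (continuous_cvg _ (wA_cont i _)).
have key (c : T -> R) c0 i : c @ F --> c0 -> (sA x0 * (1 - sA x0) != 0 \/ c0 = 0) ->
    (fun q => c q * nuc (x q) i) @ F --> c0 * nuc x0 i.
  move=> Hc [Hs|Hc0]; last rewrite Hc0 in Hc *.
    apply: cvgM => //; rewrite /nuc.
    apply: (continuous_cvg _ (minr1_cont _)).
    apply: cvg_norm; apply: cvgM; first exact: cw.
    apply: cvgV => //; apply: cvgM => //; apply: cvgB => //; exact: cvg_cst.
  rewrite mul0r; apply: cvg_sq0; first exact: Hc.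
  move=> q; exact: (nuc_le1 (x q) i).
have cl : (fun q => l q * (1 - l q)) @ F --> l0 * (1 - l0).
  by apply: cvgM => //; apply: cvgB => //; exact: cvg_cst.
rewrite /M.
apply: (@cvg_pair _ _ _ _ (nbhs _) (nbhs _)); first apply: (@cvg_pair _ _ _ _ (nbhs _) (nbhs _)).
- exact: cv_U2.
- by apply: cvg_row => i; apply: key.
- apply: cvg_row => i; apply: key.
    apply: cvgM => //; apply: cvgB; first exact: cvg_cst.
    by apply: cvgM => //; exact: cvg_cst.
  case: Hcase; [by left| by move=> ->; right; rewrite !mul0r].
Qed.


Definition E (i : 'I_k) (s : R) : A := edge_pt R (banana k) i s.

Lemma deltaE n (i j : 'I_n) : delta R n i 0 j = (j == i)%:R.
Proof. by rewrite /delta mxE. Qed.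

Lemma U2_1 x : U2 x 0 o1 = x.
Proof. by rewrite /U2 !mxE /= mulr0 mulr1 add0r. Qed.
Lemma U2_0 x : U2 x 0 ord0 = 1 - x.
Proof. by rewrite /U2 !mxE /= mulr0 mulr1 addr0. Qed.

Lemma sA_E i s : sA (E i s) = s.
Proof. exact: U2_1. Qed.

Lemma wA_E i s l : wA (E i s) l = s * (1 - s) * (l == i)%:R.
Proof. by rewrite /wA /E /edge_pt /= !mxE. Qed.

Lemma zA_E i s l : (E i s).2 0 l = s * (1 - s) * (1 - 2 * s) * (l == i)%:R.
Proof. by rewrite /E /edge_pt /= !mxE. Qed.

Lemma E_eqP i j s t : E i s = E j t -> s = t /\ (s * (1 - s) = 0 \/ i = j).
Proof.
move=> H; have st : s = t by rewrite -(sA_E i s) -(sA_E j t) H.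
split=> //; subst t.
have := congr1 (fun x => wA x i) H; rewrite !wA_E eqxx mulr1.
case: (eqVneq i j) => [->|ij]; first by right.
by rewrite mulr0 => ->; left.
Qed.

Lemma E_eq i j s : s * (1 - s) = 0 -> E i s = E j s.
Proof.
move=> H; rewrite /E /edge_pt /=; congr (_, _, _).
- by rewrite H !scale0r.
- by rewrite H !mul0r !scale0r.
Qed.

Lemma sum_delta n (F : 'I_n -> R) (i : 'I_n) : \sum_l F l * (l == i)%:R = F i.
Proof.
rewrite (bigD1 i) //= eqxx mulr1 big1 ?addr0 //.
by move=> l /negbTE ->; rewrite mulr0.
Qed.

Definition itv01 (t : R) := 0 <= t <= 1.

Lemma itvP t : `[0, 1]%classic t <-> itv01 t.
Proof. by rewrite /= in_itv. Qed.

Lemma i0k : (0 < k)%N. Proof. by apply: leq_trans hk. Qed.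
Definition i0 : 'I_k := Ordinal i0k.

Lemma realBk (x : A) : realization R (banana k) x ->
  exists i s, itv01 s /\ x = E i s.
Proof.
case=> [[v ->]|[e [t /itvP ht ->]]]; last by exists e, t.
have [v0|v1] : v = ord0 \/ v = ord_max.
  by case: v => [[|[|//]] ?]; [left|right]; apply: val_inj.
- exists i0, 0; split; first by rewrite /itv01 lexx ler01.
  by rewrite v0 /vertex_pt /E /edge_pt /= subr0 scale1r scale0r addr0 !mul0r !scale0r.
- exists i0, 1; split; first by rewrite /itv01 lexx ler01.
  by rewrite v1 /vertex_pt /E /edge_pt /= subrr scale0r scale1r add0r !mulr0 !mul0r !scale0r.
Qed.

Lemma card_m : (k + 1 <= m)%N.
Proof.
rewrite /m card_sig.
have HC := cardC [pred p : 'I_k * 'I_k | p.1 == p.2].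
rewrite card_prod card_ord in HC.
have Hd : (#|[pred p : 'I_k * 'I_k | p.1 == p.2]| <= k)%N.
  rewrite -card_sig -[X in (_ <= X)%N]card_ord.
  apply: (@leq_card _ _ (fun x : {p : 'I_k * 'I_k | p.1 == p.2} => (val x).1)).
  move=> [[a b] /= ab] [[c d] /= cd] /= ac; apply: val_inj => /=.
  move/eqP: ab cd => ab /eqP cd.
  by rewrite -ab -cd ac.
have -> : #|[pred x : 'I_k * 'I_k | x.1 != x.2]| = #|[predC [pred p : 'I_k * 'I_k | p.1 == p.2]]|.
  by apply: eq_card.
have : (3 * k <= k * k)%N by rewrite leq_mul2r hk orbT.
move: HC Hd; set X := #|_|; set Y := #|_|. lia.
Qed.

Lemma m_gt0 : (0 < m)%N. Proof. by apply: leq_trans card_m; rewrite addn1. Qed.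
Definition e0 : 'I_m := Ordinal m_gt0.

Lemma d12 e : d1 e != d2 e.
Proof. by rewrite /d1 /d2; case: (enum_val e). Qed.

Lemma edge_ex i j : i != j -> exists e, d1 e = i /\ d2 e = j.
Proof.
move=> ij; exists (enum_rank (exist _ (i, j) ij : PT)).
by rewrite /d1 /d2 enum_rankK.
Qed.

Lemma edge_uniq e e' : d1 e = d1 e' -> d2 e = d2 e' -> e = e'.
Proof.
move=> h1 h2; apply: enum_val_inj; apply: val_inj.
by move: h1 h2; rewrite /d1 /d2; case: (val (enum_val e)) => a b; case: (val (enum_val e')) => c d /= -> ->.
Qed.

Arguments edge_uniq {e e'}.

Definition EG (e : 'I_m) (t : R) : B := edge_pt R (banana m) e t.

Lemma realG (q : B) : realization R (banana m) q ->
  exists e t, itv01 t /\ q = EG e t.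
Proof.
case=> [[v ->]|[e [t /itvP ht ->]]]; last by exists e, t.
have [v0|v1] : v = ord0 \/ v = ord_max.
  by case: v => [[|[|//]] ?]; [left|right]; apply: val_inj.
- exists e0, 0; split; first by rewrite /itv01 lexx ler01.
  by rewrite v0 /vertex_pt /EG /edge_pt /= subr0 scale1r scale0r addr0 !mul0r !scale0r.
- exists e0, 1; split; first by rewrite /itv01 lexx ler01.
  by rewrite v1 /vertex_pt /EG /edge_pt /= subrr scale0r scale1r add0r !mulr0 !mul0r !scale0r.
Qed.

Lemma gg_EG e t : gg (EG e t) = (E (d1 e) t, E (d2 e) (1 - t)).
Proof.
rewrite /gg /EG /E /edge_pt /=.
have h (d : 'I_m -> 'I_k) (c : R) i : \sum_e' ((d e' == i)%:R * (c * (e' == e)%:R)) = c * (i == d e)%:R.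
  under eq_bigr do rewrite mulrA.
  by rewrite sum_delta eq_sym mulrC.
congr ((_, _, _), (_, _, _)).
- by apply/rowP => i; rewrite !mxE; under eq_bigr do rewrite !mxE; rewrite h.
- by apply/rowP => i; rewrite !mxE; under eq_bigr do rewrite !mxE; rewrite h.
- by rewrite -/(U2 t) U2_0 /U2.
- apply/rowP => i; rewrite !mxE; under eq_bigr do rewrite !mxE; rewrite h; congr (_ * _); ring.
- apply/rowP => i; rewrite !mxE; under eq_bigr do rewrite !mxE; rewrite h; ring.
Qed.


Lemma rho_E i j s t :
  rho (E i s, E j t) = s * (1 - s) * (t * (1 - t)) * (1 - (i == j)%:R).
Proof.
rewrite /rho !sA_E /=.
under eq_bigr do rewrite !wA_E.
have -> : \sum_l s * (1 - s) * (l == i)%:R * (t * (1 - t) * (l == j)%:R)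
    = \sum_l (s * (1 - s) * (t * (1 - t) * (l == j)%:R)) * (l == i)%:R.
  by apply: eq_bigr => l _; ring.
rewrite sum_delta; ring.
Qed.

Lemma psi_ge0 p : 0 <= psi p.
Proof.
rewrite /psi; apply: divr_ge0; first by rewrite mulr_ge0 ?sqrtr_ge0.
by rewrite addr_ge0.
Qed.

Lemma DD_ge0 p : 0 <= DD p.
Proof. by rewrite /DD addr_ge0 ?psi_ge0. Qed.

Lemma tau_mul p : DD p != 0 ->
  tau p * (1 - tau p) = psi p * (psi p + 2 * `|dd p|) / (4 * DD p ^+ 2).
Proof.
move=> H; have hd : dd p ^+ 2 = `|dd p| ^+ 2 by rewrite real_normK ?num_real.
move: H; rewrite /tau /DD => H.
transitivity (((`|dd p| + psi p) ^+ 2 - dd p ^+ 2) / (4 * (`|dd p| + psi p) ^+ 2)).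
  by field.
by rewrite hd; field.
Qed.

Lemma abs_le_DD p : `|dd p| <= DD p.
Proof. by rewrite /DD lerDl psi_ge0. Qed.

Lemma tau01 p : DD p != 0 -> itv01 (tau p).
Proof.
move=> H; have D0 : 0 < DD p by rewrite lt_neqAle eq_sym H DD_ge0.
have h := abs_le_DD p.
have : `|dd p / (2 * DD p)| <= 2^-1.
  have D2 : 0 < 2 * DD p by rewrite mulr_gt0.
  rewrite normrM normfV (gtr0_norm D2) ler_pdivrMr //; lra.
rewrite /itv01 /tau => /ler_normlP [h1 h2]; apply/andP; split; lra.
Qed.

Lemma itv_ab s : itv01 s -> 0 <= s * (1 - s).
Proof. by case/andP => h0 h1; rewrite mulr_ge0 // subr_ge0. Qed.

Arguments itv_ab {s}.

Lemma Wf_E i j s t e : itv01 s -> itv01 t -> DD (E i s, E j t) != 0 ->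
  Wf (E i s, E j t) e =
  tau (E i s, E j t) * (1 - tau (E i s, E j t)) * ((d1 e == i) && (d2 e == j))%:R.
Proof.
move=> hs ht H; rewrite (tau_mul _ H) /Wf /= !wA_E.
case: (eqVneq (d1 e) i) => [h1|h1]; last by rewrite /= !mulr0 sqrtr0 !mul0r.
case: (eqVneq (d2 e) j) => [h2|h2]; last by rewrite /= !mulr0 sqrtr0 !mulr0 !mul0r.
have ij : i != j by rewrite -h1 -h2 d12.
rewrite /= !mulr1.
have -> : psi (E i s, E j t) = 4 * (Num.sqrt (s * (1 - s)) * Num.sqrt (t * (1 - t))) / (1 + `|dd (E i s, E j t)|).
  by rewrite /psi rho_E (negbTE ij) subr0 mulr1 sqrtrM // itv_ab.
move: H; rewrite /DD.
set S := Num.sqrt _ * Num.sqrt _; set u := `|dd _|.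
move=> H; have u1 : 1 + u != 0 by exact: one_abs_neq0.
field. by rewrite H u1.
Qed.

Lemma DD_neq0 i j s t : itv01 s -> itv01 t -> E i s <> E j t -> DD (E i s, E j t) != 0.
Proof.
move=> hs ht hne; apply/negP => /eqP H0.
have hu := normr_ge0 (dd (E i s, E j t)); have hp := psi_ge0 (E i s, E j t).
have u0 : `|dd (E i s, E j t)| = 0 by move: H0; rewrite /DD; lra.
have p0 : psi (E i s, E j t) = 0 by move: H0; rewrite /DD; lra.
move/eqP: u0; rewrite normr_eq0 /dd !sA_E subr_eq0 => /eqP st; subst t.
move: p0; rewrite /psi => /eqP.
rewrite mulf_eq0 invr_eq0 (negbTE (one_abs_neq0 _)) orbF mulf_eq0 sqrtr_eq0 rho_E.
case/orP => [|h]; first by rewrite pnatr_eq0.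
case: (eqVneq i j) h => [ij|ij]; first by subst; move=> _; apply: hne.
rewrite subr0 mulr1 => h.
have a0 : s * (1 - s) = 0.
  apply/eqP; rewrite -sqrf_eq0 eq_le sqr_ge0 andbT expr2.
  exact: h.
by apply: hne; apply: E_eq.
Qed.

Lemma ff_E i j s t : itv01 s -> itv01 t -> DD (E i s, E j t) != 0 ->
  exists e, ff (E i s, E j t) = EG e (tau (E i s, E j t)) /\
            (i != j -> d1 e = i /\ d2 e = j).
Proof.
move=> hs ht H.
set p := (E i s, E j t).
have key : forall e, (forall e', ((d1 e' == i) && (d2 e' == j))%:R * (tau p * (1 - tau p))
        = (e' == e)%:R * (tau p * (1 - tau p))) -> ff p = EG e (tau p).
  move=> e he; rewrite /ff /EG /edge_pt /=; congr (_, _, _).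
  - apply/rowP => e'; rewrite !mxE Wf_E // -/p mulrC he; ring.
  - apply/rowP => e'; rewrite !mxE Wf_E // -/p; have h := he e'.
    transitivity ((1 - 2 * tau p) * (((d1 e' == i) && (d2 e' == j))%:R * (tau p * (1 - tau p)))).
      ring.
    rewrite h; ring.
case: (eqVneq i j) => [ij|ij].
  subst j; exists e0; split => //; apply: key => e'.
  have -> : tau p * (1 - tau p) = 0.
    rewrite (tau_mul _ H).
    have -> : psi p = 0 by rewrite /psi /p rho_E eqxx subrr mulr0 sqrtr0 mulr0 mul0r.
    by rewrite !mul0r.
  by rewrite !mulr0.
have [e [h1 h2]] := edge_ex _ _ ij.
exists e; split => //; apply: key => e'.
congr (_ * _); congr (_%:R).
case: (eqVneq e' e) => [->|ne]; first by rewrite h1 h2 !eqxx.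
case: (boolP ((d1 e' == i) && (d2 e' == j))) => // /andP [/eqP a /eqP b].
by case/eqP: ne; apply: (@edge_uniq e' e); rewrite ?a ?b ?h1 ?h2.
Qed.

Lemma itv_1m t : itv01 t -> itv01 (1 - t).
Proof. by rewrite /itv01 => /andP [h0 h1]; apply/andP; split; lra. Qed.

Arguments itv_1m {t}.
Arguments ff_E {i j s t}.
Arguments DD_neq0 {i j s t}.

Lemma gg_conf e t : itv01 t -> E (d1 e) t <> E (d2 e) (1 - t).
Proof.
move=> ht /E_eqP [h1 [h2|h2]]; last by move: (d12 e); rewrite h2 eqxx.
have : t = 2^-1 by move: h1; lra.
by move=> ht2; move: h2; rewrite ht2; lra.
Qed.

Lemma DD_gg e t : itv01 t -> DD (E (d1 e) t, E (d2 e) (1 - t)) = 1.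
Proof.
move=> ht.
have a0 := itv_ab ht.
rewrite /DD /psi rho_E (negbTE (d12 e)) subr0 mulr1.
have -> : (1 - t) * (1 - (1 - t)) = t * (1 - t) by ring.
rewrite -expr2 sqrtr_sqr (ger0_norm a0).
set u := `|dd _|.
have hu : u ^+ 2 = (2 * t - 1) ^+ 2.
  by rewrite /u real_normK ?num_real // /dd !sA_E; congr (_ ^+ 2); ring.
have u1 : 1 + u != 0 by exact: one_abs_neq0.
apply: (mulIf u1).
transitivity (u ^+ 2 + u + 4 * (t * (1 - t))); first by field.
rewrite hu; ring.
Qed.

Lemma tau_gg e t : itv01 t -> tau (E (d1 e) t, E (d2 e) (1 - t)) = t.
Proof.
move=> ht; rewrite /tau DD_gg // /dd !sA_E; by field.
Qed.

Lemma ffgg q : realization R (banana m) q -> ff (gg q) = q.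
Proof.
move=> /realG [e [t [ht ->]]]; rewrite gg_EG.
have ht' := itv_1m ht.
have hD : DD (E (d1 e) t, E (d2 e) (1 - t)) != 0 by rewrite DD_gg // oner_neq0.
have [e' [-> h]] := ff_E ht ht' hD.
have [h1 h2] := h (d12 e).
by rewrite (edge_uniq h1 h2) tau_gg.
Qed.

Lemma tau_psi0 p : psi p = 0 -> DD p != 0 ->
  (0 < dd p -> tau p = 1) /\ (dd p < 0 -> tau p = 0).
Proof.
rewrite /tau /DD => -> ; rewrite addr0 => H; split => hd.
- by rewrite gtr0_norm //; field; rewrite gt_eqF.
- by rewrite ltr0_norm //; field; rewrite lt_eqF.
Qed.

Lemma psi_a0 i j s t : s * (1 - s) = 0 \/ t * (1 - t) = 0 -> psi (E i s, E j t) = 0.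
Proof.
move=> h; rewrite /psi rho_E.
have -> : s * (1 - s) * (t * (1 - t)) = 0 by case: h => ->; rewrite ?mul0r ?mulr0.
by rewrite mul0r sqrtr0 mulr0 mul0r.
Qed.

Lemma a0_cases (s : R) : s * (1 - s) = 0 -> s = 0 \/ s = 1.
Proof.
move/eqP; rewrite mulf_eq0 subr_eq0 => /orP [/eqP ->|/eqP <-]; by [left|right].
Qed.

Lemma dd_neq0_psi p : psi p = 0 -> DD p != 0 -> dd p != 0.
Proof. by rewrite /DD => ->; rewrite addr0 normr_eq0. Qed.

Arguments dd_neq0_psi {p}.
Arguments tau_psi0 {p}.

Lemma conf_vertex i j s t : itv01 s -> itv01 t -> E i s <> E j t ->
  (s * (1 - s) = 0 -> tau (E i s, E j t) = s) /\
  (t * (1 - t) = 0 -> 1 - tau (E i s, E j t) = t).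
Proof.
move=> hs ht hne; have hD := DD_neq0 hs ht hne.
move: hs ht; rewrite /itv01 => /andP [s0 s1] /andP [t0 t1].
split => /[dup] h /a0_cases [] hv.
- have hp := psi_a0 i j s t (or_introl h); have dn0 := dd_neq0_psi hp hD.
  have [_ Hn] := tau_psi0 hp hD.
  have hsg : dd (E i s, E j t) < 0.
    by move: dn0; rewrite /dd !sA_E hv lt_neqAle => ->; rewrite sub0r oppr_le0.
  by rewrite Hn // hv.
- have hp := psi_a0 i j s t (or_introl h); have dn0 := dd_neq0_psi hp hD.
  have [Hp _] := tau_psi0 hp hD.
  have hsg : 0 < dd (E i s, E j t).
    by move: dn0; rewrite /dd !sA_E hv lt_neqAle eq_sym => ->; rewrite subr_ge0.
  by rewrite Hp // hv.
- have hp := psi_a0 i j s t (or_intror h); have dn0 := dd_neq0_psi hp hD.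
  have [Hp _] := tau_psi0 hp hD.
  have hsg : 0 < dd (E i s, E j t).
    by move: dn0; rewrite /dd !sA_E hv lt_neqAle eq_sym => ->; rewrite subr0.
  by rewrite Hp // hv subrr.
- have hp := psi_a0 i j s t (or_intror h); have dn0 := dd_neq0_psi hp hD.
  have [_ Hn] := tau_psi0 hp hD.
  have hsg : dd (E i s, E j t) < 0.
    by move: dn0; rewrite /dd !sA_E hv lt_neqAle => ->; rewrite subr_le0.
  by rewrite Hn // hv subr0.
Qed.

Arguments conf_vertex {i j s t}.

Lemma conv01 (l a b : R) : 0 <= l <= 1 -> 0 < a < 1 -> 0 < b < 1 ->
  0 < l * a + (1 - l) * b < 1.
Proof.
move=> /andP [l0 l1] /andP [a0 a1] /andP [b0 b1].
have h1 : 0 <= l * a by rewrite mulr_ge0 // ltW.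
have h2 : 0 <= (1 - l) * b by rewrite mulr_ge0 ?subr_ge0 // ltW.
have h3 : l * a <= l by rewrite ler_piMr // ltW.
have h4 : (1 - l) * b <= 1 - l by rewrite ler_piMr ?subr_ge0 // ltW.
case: (eqVneq l 0) => [->|ln0]; first by rewrite mul0r add0r subr0 mul1r b0 b1.
have lp : 0 < l by rewrite lt_neqAle eq_sym ln0.
have h5 : 0 < l * a by rewrite mulr_gt0.
have h6 : l * a < l by rewrite gtr_pMr.
apply/andP; split; lra.
Qed.

Lemma M_E i s l : s * (1 - s) != 0 \/ l * (1 - l) = 0 -> M (E i s) l = E i l.
Proof.
move=> h; rewrite /M /E /edge_pt /=; congr (_, _, _).
- apply/rowP => i'; rewrite !mxE; case: h => [h|->]; last by rewrite !mul0r.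
  congr (_ * _); rewrite /nuc sA_E wA_E mulrAC mulfV // mul1r normr_nat.
  by case: (i' == i); rewrite /= ?min_l ?min_r ?ler01 ?lexx.
- apply/rowP => i'; rewrite !mxE; case: h => [h|->]; last by rewrite !mul0r.
  congr (_ * _); rewrite /nuc sA_E wA_E mulrAC mulfV // mul1r normr_nat.
  by case: (i' == i); rewrite /= ?min_l ?min_r ?ler01 ?lexx.
Qed.

Lemma Hc_E i j s t l : itv01 s -> itv01 t -> E i s <> E j t ->
  Hc (l, (E i s, E j t)) =
  (E i (l * s + (1 - l) * tau (E i s, E j t)),
   E j (l * t + (1 - l) * (1 - tau (E i s, E j t)))).
Proof.
move=> hs ht hne; have [v1 v2] := conf_vertex hs ht hne.
rewrite /Hc /= !sA_E; congr pair; apply: M_E.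
- case: (eqVneq (s * (1 - s)) 0) => [h|h]; [right|by left].
  by rewrite v1 // -mulrDl subrKC mul1r.
- case: (eqVneq (t * (1 - t)) 0) => [h|h]; [right|by left].
  by rewrite v2 // -mulrDl subrKC mul1r.
Qed.

Lemma Hc_in i j s t l : itv01 s -> itv01 t -> E i s <> E j t -> itv01 l ->
  let tt := tau (E i s, E j t) in
  itv01 (l * s + (1 - l) * tt) /\ itv01 (l * t + (1 - l) * (1 - tt)) /\
  E i (l * s + (1 - l) * tt) <> E j (l * t + (1 - l) * (1 - tt)).
Proof.
move=> hs ht hne hl tt.
have hD := DD_neq0 hs ht hne.
have htt : itv01 tt by exact: tau01.
have cv (a b : R) : itv01 a -> itv01 b -> itv01 (l * a + (1 - l) * b).
  move: hl; rewrite /itv01 => /andP [l0 l1] /andP [a0 a1] /andP [b0 b1].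
  have h1 : 0 <= l * a by rewrite mulr_ge0.
  have h2 : 0 <= (1 - l) * b by rewrite mulr_ge0 ?subr_ge0.
  have h3 : l * a <= l by rewrite ler_piMr.
  have h4 : (1 - l) * b <= 1 - l by rewrite ler_piMr ?subr_ge0.
  apply/andP; split; lra.
split; first exact: cv.
split; first by apply: cv => //; exact: itv_1m.
move=> /E_eqP [heq hor].
case: (eqVneq (psi (E i s, E j t)) 0) => [hp|hp].
  have dn0 := dd_neq0_psi hp hD.
  have [Hp Hn] := tau_psi0 hp hD.
  move: hl heq; rewrite /itv01 => /andP [l0 l1].
  move: dn0; rewrite /dd !sA_E => dn0.
  case: (ltgtP (s - t) 0) dn0 => // hsg _.
  - rewrite /tt Hn ?/dd ?sA_E // => e.
    have h1 : 0 <= l * (t - s) by rewrite mulr_ge0 // subr_ge0 ltW // -subr_lt0.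
    have e1 : l = 1 by move: e h1; rewrite !mulr0 !subr0 !mulr1; lra.
    by move: e; rewrite e1 subrr !mul0r !mul1r !addr0 => e2; move: hsg; rewrite e2 subrr ltxx.
  - rewrite /tt Hp ?/dd ?sA_E // => e.
    have h1 : 0 <= l * (s - t) by rewrite mulr_ge0 // subr_ge0 ltW // -subr_gt0.
    have e1 : l = 1 by move: e h1; rewrite !subrr !mulr0 !mulr1; lra.
    by move: e; rewrite e1 subrr !mul0r !mul1r !addr0 => e2; move: hsg; rewrite e2 subrr ltxx.
have pp : 0 < psi (E i s, E j t) by rewrite lt_neqAle eq_sym hp psi_ge0.
have : rho (E i s, E j t) != 0.
  apply: contra hp => /eqP r0; apply/eqP; by rewrite /psi r0 sqrtr0 mulr0 mul0r.
rewrite rho_E => hr.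
have ij : i != j by apply: contraNneq hr => ->; rewrite eqxx subrr mulr0.
move: hr; rewrite (negbTE ij) subr0 mulr1 mulf_eq0 negb_or => /andP [as0 bt0].
case: hor => [h|]; last by move=> ij'; move: ij; rewrite ij' eqxx.
have ttin : 0 < tt < 1.
  have hle := abs_le_DD (E i s, E j t).
  have D0 : 0 < DD (E i s, E j t) by rewrite lt_neqAle eq_sym hD DD_ge0.
  have hlt : `|dd (E i s, E j t)| < DD (E i s, E j t) by rewrite /DD ltrDl.
  have : `|dd (E i s, E j t) / (2 * DD (E i s, E j t))| < 2^-1.
    have D2 : 0 < 2 * DD (E i s, E j t) by rewrite mulr_gt0.
    rewrite normrM normfV (gtr0_norm D2) ltr_pdivrMr //; lra.
  rewrite /tt /tau => /ltr_normlP [h1 h2]; apply/andP; split; lra.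
have sin : 0 < s < 1.
  move: hs as0; rewrite /itv01 => /andP [s0 s1] as0.
  apply/andP; split; rewrite lt_neqAle ?s0 ?s1 andbT; apply: contra as0 => /eqP h'.
    by rewrite -h' mul0r.
  by rewrite h' subrr mulr0.
have := conv01 _ _ _ hl sin ttin; move: h; set x := _ + _ => hx /andP [x0 x1].
by move/eqP: hx; rewrite mulf_eq0 subr_eq0 (gt_eqF x0) eq_sym (lt_eqF x1).
Qed.

Lemma Hc_cont i j s t l0 : itv01 s -> itv01 t -> E i s <> E j t ->
  {for (l0, (E i s, E j t)), continuous Hc}.
Proof.
move=> hs ht hne; have hD := DD_neq0 hs ht hne.
have [v1 v2] := conf_vertex hs ht hne.
set p0 := (E i s, E j t).
rewrite /prop_for /continuous_at /Hc.
have c1 : (fun lp : R * P => lp.1) @ nbhs (l0, p0) --> l0 by exact: cvg_fst.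
have c2 : (fun lp : R * P => lp.2) @ nbhs (l0, p0) --> p0 by exact: cvg_snd.
have c21 : (fun lp : R * P => lp.2.1) @ nbhs (l0, p0) --> p0.1.
  by apply: (continuous_cvg _ (@cvg_fst _ _ _ _ _)).
have c22 : (fun lp : R * P => lp.2.2) @ nbhs (l0, p0) --> p0.2.
  by apply: (continuous_cvg _ (@cvg_snd _ _ _ _ _)).
have ct : (fun lp : R * P => tau lp.2) @ nbhs (l0, p0) --> tau p0.
  by apply: (continuous_cvg _ (cv_tau p0 hD)).
have cs1 : (fun lp : R * P => sA lp.2.1) @ nbhs (l0, p0) --> sA p0.1.
  by apply: (continuous_cvg _ (sA_cont _)).
have cs2 : (fun lp : R * P => sA lp.2.2) @ nbhs (l0, p0) --> sA p0.2.
  by apply: (continuous_cvg _ (sA_cont _)).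
apply: (@cvg_pair _ _ _ _ (nbhs _) (nbhs _)).
- apply: M_cv => //.
    apply: cvgD; apply: cvgM => //; apply: cvgB => //; exact: cvg_cst.
  rewrite /p0 /= !sA_E.
  case: (eqVneq (s * (1 - s)) 0) => [h|h]; [right|by left].
  by rewrite v1 // -mulrDl subrKC mul1r.
- apply: M_cv => //.
    apply: cvgD; apply: cvgM => //; apply: cvgB => //; exact: cvg_cst.
  rewrite /p0 /= !sA_E.
  case: (eqVneq (t * (1 - t)) 0) => [h|h]; [right|by left].
  by rewrite v2 // -mulrDl subrKC mul1r.
Qed.

Lemma Hc_1 i j s t : itv01 s -> itv01 t -> E i s <> E j t ->
  Hc (1, (E i s, E j t)) = (E i s, E j t).
Proof.
move=> hs ht hne; rewrite Hc_E // subrr !mul0r !addr0 !mul1r //.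
Qed.

Lemma Hc_0 i j s t : itv01 s -> itv01 t -> E i s <> E j t ->
  Hc (0, (E i s, E j t)) = gg (ff (E i s, E j t)).
Proof.
move=> hs ht hne; have hD := DD_neq0 hs ht hne.
have [e [-> h]] := ff_E hs ht hD.
rewrite Hc_E // gg_EG !mul0r !add0r subr0 !mul1r.
case: (eqVneq i j) => [ij|ij]; last by have [-> ->] := h ij.
have z : tau (E i s, E j t) * (1 - tau (E i s, E j t)) = 0.
  rewrite (tau_mul _ hD).
  have -> : psi (E i s, E j t) = 0 by rewrite /psi rho_E ij eqxx subrr mulr0 sqrtr0 mulr0 mul0r.
  by rewrite !mul0r.
congr pair; apply: E_eq => //.
by rewrite mulrC opprB addrC subrK.
Qed.

Lemma E_real i s : itv01 s -> realization R (banana k) (E i s).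
Proof. by move=> hs; right; exists i; exists s => //; apply/itvP. Qed.

Lemma EG_real e t : itv01 t -> realization R (banana m) (EG e t).
Proof. by move=> ht; right; exists e; exists t => //; apply/itvP. Qed.

Lemma conf_dest (p : P) : Conf2 _ (realization R (banana k)) p ->
  exists i j s t, [/\ itv01 s, itv01 t, E i s <> E j t & p = (E i s, E j t)].
Proof.
case: p => x y [/= /realBk [i [s [hs ->]]] [/realBk [j [t [ht ->]]] hne]].
by exists i, j, s, t.
Qed.

Lemma G_connected : gconnected (banana m).
Proof.
split => // u v.
have a : gadj (banana m) ord0 ord_max by apply/existsP; exists e0; rewrite !eqxx.
have b : gadj (banana m) ord_max ord0 by apply/existsP; exists e0; rewrite !eqxx orbT.
have [u0|u1] : u = ord0 \/ u = ord_max by case: u => [[|[|//]] ?]; [left|right]; apply: val_inj.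
all: have [v0|v1] : v = ord0 \/ v = ord_max by case: v => [[|[|//]] ?]; [left|right]; apply: val_inj.
all: subst; rewrite ?connect0 //; exact: connect1.
Qed.

Lemma G_betti : (k - 1 <= betti1 (banana m))%N.
Proof. rewrite /betti1 /=; have := card_m; lia. Qed.

Lemma main_sec :
  exists G : multigraph,
    gconnected G /\ (k - 1 <= betti1 G)%N /\
    homotopy_equivalent R _ _ (Conf2 _ (realization R (banana k)))
                          (realization R G).
Proof.
exists (banana m); split; first exact: G_connected.
split; first exact: G_betti.
exists ff, gg.
split.
  apply: continuous_in_subspaceT => p /set_mem /conf_dest [i [j [s [t [hs ht hne ->]]]]].
  exact: ff_cont (DD_neq0 hs ht hne).
split; first by apply: continuous_subspaceT; exact: gg_cont.
split.
  move=> p /conf_dest [i [j [s [t [hs ht hne ->]]]]].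
  have [e [-> _]] := ff_E hs ht (DD_neq0 hs ht hne).
  by apply: EG_real; apply: tau01; exact: DD_neq0.
split.
  move=> q /realG [e [t [ht ->]]]; rewrite gg_EG.
  split; [exact: E_real|split; [apply: E_real; exact: itv_1m|exact: gg_conf]].
split.
- exists Hc; split.
    apply: continuous_in_subspaceT => -[l p] /set_mem [_].
    move=> /conf_dest [i [j [s [t [hs ht hne /= ->]]]]].
    exact: Hc_cont.
  split.
    move=> p /conf_dest [i [j [s [t [hs ht hne ->]]]]].
    by rewrite Hc_0 ?Hc_1.
  move=> l p /itvP hl /conf_dest [i [j [s [t [hs ht hne ->]]]]].
  rewrite Hc_E //; have [h1 [h2 h3]] := Hc_in _ _ _ _ _ hs ht hne hl.
  by split; [exact: E_real|split; [exact: E_real|exact: h3]].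
- exists (fun lq : R * B => lq.2); split.
    by apply: continuous_subspaceT => x; exact: cvg_snd.
  split => //.
  by move=> q hq; rewrite /= ffgg.
Qed.

End Toolkit.


Theorem mainTheorem5 (R : realType) (k : nat) (hk : (3 <= k)%N) :
  exists G : multigraph,
    gconnected G /\ (k - 1 <= betti1 G)%N /\
    homotopy_equivalent R _ _ (Conf2 _ (realization R (banana k)))
                          (realization R G).
Proof. exact: main_sec. Qed.
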